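(* Let $n\ge1$ and let $A$ be an admissible set in $\{1,3,\dots,2n+1\}$ with associated vector $(a(1),\dots,a(2n))$. Let $\widehat{A}$ be the set of primary odd-odd-descent permutations $\sigma\in\mathcal{W}^*_{2n+1}$ whose set of valleys is exactly the set of white elements of $A$ and whose set of peaks is exactly the set of black elements of $A$. Then \[ \sum_{\sigma\in\widehat{A}} q^{\mathrm{art}(\sigma)}=\prod_{i=1}^{2n}[a(i)]_q . \]
   Context: $[k]_q=1+q+\cdots+q^{k-1}$. For $\sigma\in\mathfrak{S}_m$, a descent is an index $i$ with $\sigma_i>\sigma_{i+1}$; $\mathcal{W}^*_{2n+1}$ is the set of permutations of $[2n+1]$ whose every descent pair $(\sigma_i,\sigma_{i+1})$ consists of two odd numbers and whose last entry is odd. With $\sigma_0=\sigma_{m+1}=0$, $\sigma_i$ is a peak if $\sigma_{i-1}<\sigma_i>\sigma_{i+1}$, a valley if $\sigma_{i-1}>\sigma_i<\sigma_{i+1}$, a double descent if $\sigma_{i-1}>\sigma_i>\sigma_{i+1}$. $\mathrm{art}(\sigma)=\sum_{i=1}^m(v(i)-p(i))$, where $v(i)$ (resp. $p(i)$) counts valleys (resp. peaks) less than $i$ located to the left of $i$ in $\sigma$. $\sigma\in\mathcal{W}^*_{2n+1}$ is primary odd-odd-descent if it has no double descent and $\sigma_{2n}<\sigma_{2n+1}$. An admissible set in $\{1,3,\dots,2n+1\}$ is a set $A$ of odd numbers in $\{1,3,\dots,2n+1\}$, each colored white or black, such that: (i) $A$ has $k$ white and $k+1$ black elements for some $k\ge0$,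 and $2n+1$ is black; (ii) for each $i\in[2n]$, $A\cap\{1,\dots,i\}$ has at least as many white as black elements. Its vector is $a(i)=f(i)-g(i)+1$ for $1\le i\le 2n$, where $f(i)$ (resp. $g(i)$) is the number of white (resp. black) elements of $A$ less than $i$. *)

(* Defs.v *)
From mathcomp Require Import all_boot all_order all_algebra all_fingroup.
Set Implicit Arguments. Unset Strict Implicit. Unset Printing Implicit Defensive.
Import GRing.Theory Num.Theory.

(* sigma_i for a permutation s of {0..m-1}, read as a permutation of [m]
   (entry at position i, 1 <= i <= m, is (s (i-1)).+1); sigma_0 = sigma_{m+1} = 0. *)
Definition sv m (s : 'S_m) (i : nat) : nat :=
  nth 0 (0 :: [seq (s j).+1 | j <- enum 'I_m]) i.

Definition is_peak_pos m (s : 'S_m) (i : nat) : bool :=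
  [&& 0 < i, i <= m, sv s i.-1 < sv s i & sv s i.+1 < sv s i].
Definition is_valley_pos m (s : 'S_m) (i : nat) : bool :=
  [&& 0 < i, i <= m, sv s i < sv s i.-1 & sv s i < sv s i.+1].
Definition is_ddes_pos m (s : 'S_m) (i : nat) : bool :=
  [&& 0 < i, i <= m, sv s i < sv s i.-1 & sv s i.+1 < sv s i].

Definition in_Wstar m (s : 'S_m) : bool :=
  [forall i : 'I_m, (i.+1 < m) ==> (sv s i.+2 < sv s i.+1) ==>
                    odd (sv s i.+1) && odd (sv s i.+2)] && odd (sv s m).

Definition primary n (s : 'S_(n.*2.+1)) : bool :=
  [&& in_Wstar s, [forall i : 'I_(n.*2.+1), ~~ is_ddes_pos s i.+1]
    & sv s n.*2 < sv s n.*2.+1].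

Definition valley_val m (s : 'S_m) (x : nat) : bool :=
  [exists i : 'I_m, is_valley_pos s i.+1 && (sv s i.+1 == x)].
Definition peak_val m (s : 'S_m) (x : nat) : bool :=
  [exists i : 'I_m, is_peak_pos s i.+1 && (sv s i.+1 == x)].

(* art(sigma) = sum_{i=1}^m (v(i) - p(i)); the value i = y.+1 sits at position
   (s^-1 y).+1, and position j.+1 holds the value (s j).+1. *)
Definition vcount m (s : 'S_m) (y : 'I_m) : nat :=
  #|[set j : 'I_m | [&& is_valley_pos s j.+1, s j < y & j < (s^-1)%g y]]|.
Definition pcount m (s : 'S_m) (y : 'I_m) : nat :=
  #|[set j : 'I_m | [&& is_peak_pos s j.+1, s j < y & j < (s^-1)%g y]]|.
Definition art m (s : 'S_m) : int :=
  \sum_(y : 'I_m) ((vcount s y)%:Z - (pcount s y)%:Z).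

(* admissible set: W = white elements, B = black elements (values in 0..2n+1) *)
Definition admissible n (W B : {set 'I_(n.*2.+2)}) : bool :=
  [&& [disjoint W & B],
      [forall x in W :|: B, odd x],
      #|B| == #|W|.+1,
      (ord_max : 'I_(n.*2.+2)) \in B &
      [forall i : 'I_(n.*2.+1), (0 < i) ==>
         (#|[set x in B | x <= i]| <= #|[set x in W | x <= i]|)]].

(* a(i) = f(i) - g(i) + 1 (nonnegative for admissible sets) *)
Definition avec n (W B : {set 'I_(n.*2.+2)}) (i : nat) : nat :=
  #|[set x in W | x < i]|.+1 - #|[set x in B | x < i]|.

Definition qint (R : ringType) (q : R) (k : nat) : R := \sum_(j < k) q ^+ j.

Definition hatA n (W B : {set 'I_(n.*2.+2)}) (s : 'S_(n.*2.+1)) : bool :=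
  [&& primary s,
      [set x : 'I_(n.*2.+2) | valley_val s x] == W &
      [set x : 'I_(n.*2.+2) | peak_val s x] == B].

(* Main.v *)
Require Import Defs.
From mathcomp Require Import all_boot all_order all_algebra all_fingroup.
From mathcomp Require Import zify ring.
Import GRing.Theory Num.Theory.
Set Implicit Arguments. Unset Strict Implicit. Unset Printing Implicit Defensive.

Definition okp (w b : pred nat) (x y : nat) :=
  (b x ==> w y && (y < x)) && (~~ w y ==> (x < y)).
Fixpoint valid (w b : pred nat) (t : seq nat) : bool :=
  match t with
  | x :: ((y :: _) as u) => okp w b x y && valid w b u
  | _ => true end.
Definition lok (b : pred nat) (t : seq nat) k := (k == 0) || ~~ b (nth 0 t k.-1).
Definition rok (w : pred nat) (t : seq nat) k := (k == size t) || w (nth 0 t k).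
Definition insp w b t k := lok b t k && rok w t k.
Definition eps (w b : pred nat) (x : nat) : int := (w x)%:Z - (b x)%:Z.
Definition Pv w b (t : seq nat) k : int := \sum_(x <- take k t) eps w b x.
Fixpoint artL w b (t : seq nat) : int :=
  match t with [::] => 0 | x :: u => eps w b x * (count (fun y => x < y) u)%:Z + artL w b u end.
Fixpoint insl (t : seq nat) k (M : nat) {struct k} :=
  match k, t with 0, _ => M :: t | k'.+1, [::] => [:: M] | k'.+1, x :: t' => x :: insl t' k' M end.


Lemma qintS (R : ringType) (q : R) k : qint q k.+1 = (1 + q * qint q k)%R.
Proof.
rewrite /qint big_ord_recl expr0 mulr_sumr; congr (_ + _)%R.
by apply: eq_bigr => i _; rewrite exprS.
Qed.

Definition Sins (R : unitRingType) (q : R) w b t :=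
  (\sum_(0 <= k < (size t).+1 | insp w b t k) q ^ Pv w b t k)%R.

Definition hdw (w : pred nat) (t : seq nat) := if t is y :: _ then w y else true.

Section SL.
Local Open Scope ring_scope.
Lemma Sins_lem (R : fieldType) (q : R) (hq : q != 0) (w b : pred nat)
  (wb : forall x, w x -> ~~ b x) t :
  valid w b t ->
  Sins q w b t = qint q (count w t + 1 - count b t)%N /\
  (count b t + hdw w t <= count w t + 1)%N.
Proof.

have qu : q \is a GRing.unit by rewrite unitfE.
elim: t => [|x t IH] /=.
  by move=> _; rewrite /Sins big_mkcond big_nat1 /insp /lok /rok /Pv /= big_nil expr0z /qint big_ord1 expr0.
move=> hv.
have hv' : valid w b t by case: t hv {IH} => // y u /andP[].
have hok : (if t is y :: _ then okp w b x y else true) by case: t hv {IH hv'} => // y u /andP[].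
case: (IH hv') => {IH} IHs IHc.
set A := \sum_(0 <= i < (size t)| insp w b t i.+1) q ^ Pv w b t i.+1.
have E1 : Sins q w b t = (if insp w b t 0 then 1 else 0) + A.
  rewrite /Sins big_mkcond big_nat_recl // /A [in RHS]big_mkcond /=.
  by rewrite /Pv take0 big_nil expr0z.
have E2 : Sins q w b (x :: t) = (if w x then 1 else 0) +
    ((if insp w b t 0 && ~~ b x then q ^ eps w b x else 0) + q ^ eps w b x * A).
  rewrite /Sins big_mkcond big_nat_recl //= big_mkcond big_nat_recl //=.
  rewrite {1}/insp /lok /rok /= /Pv take0 big_nil expr0z.
  congr (_ + _)%R.
  congr (_ + _)%R.
    by rewrite /insp /lok /rok /= take0 big_cons big_nil addr0 eqSS andbC.
  rewrite /A mulr_sumr [RHS]big_mkcond /=; apply: eq_bigr => i _.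
  rewrite /insp /lok /rok /= eqSS big_cons exprzDr //.
have hins0 : insp w b t 0 = hdw w t.
  by rewrite /insp /lok /rok /=; case: t {hok hv' IHs IHc A E1 E2 hv}.
case wx: (w x).
  have nbx : b x = false by apply/negbTE/wb.
  rewrite E2 /eps wx nbx /= subr0 expr1z andbT.
  have -> : (if insp w b t 0 then q else 0) + q * A = q * Sins q w b t.
    by rewrite E1 mulrDr; case: (insp _ _ _ _); rewrite ?mulr1 ?mulr0.
  rewrite IHs.
  split; last by move: IHc; case: (hdw w t) => /=; lia.
  have -> : (1 + count w t + 1 - (0 + count b t))%N = (count w t + 1 - count b t).+1.
    move: IHc; case: (hdw w t) => /=; lia.
  by rewrite qintS.
case bx: (b x).
  have h0 : insp w b t 0.
    rewrite hins0 /hdw; case: t hok {hv' IHs IHc A E1 E2 hins0 hv} => //= y u.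
    by rewrite /okp bx /= => /andP[/andP[]].
  have hc : (count b t <= count w t)%N.
    by move: IHc; rewrite -hins0 h0; lia.
  rewrite E2 /eps wx bx /= add0r andbF add0r.
  move: E1; rewrite h0 IHs.
  have -> : (count w t + 1 - count b t = (count w t - count b t).+1)%N by lia.
  rewrite qintS => /addrI <-.
  have -> : (0%Z - 1%Z : int) = (-1)%R by [].
  rewrite exprN1 mulKf //.
  split; first by congr qint; lia.
  by move: IHc; case: (hdw w t) => /=; lia.
rewrite E2 /eps wx bx /= subrr expr0z mul1r add0r andbT.
rewrite -E1 IHs; split; first by congr qint.
by move: IHc; case: (hdw w t) => /=; lia.
Qed.
End SL.

Lemma insl_cat t k M : insl t k M = take k t ++ M :: drop k t.
Proof. by elim: t k => [|x t IH] [|k] //=; rewrite IH. Qed.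

Lemma perm_insl t k M : perm_eq (insl t k M) (M :: t).
Proof.
rewrite insl_cat -{3}(cat_take_drop k t).
change (perm_eq (take k t ++ [:: M] ++ drop k t) ([:: M] ++ take k t ++ drop k t)).
by rewrite perm_catCA.
Qed.

Lemma count_gt0 (M : nat) t : all (fun x => x < M) t -> count (fun y => M < y) t = 0.
Proof.
elim: t => //= x t IH /andP[xM h]; rewrite IH // addn0.
by have -> : (M < x) = false by rewrite ltnNge ltnW.
Qed.

Lemma artL_cons w b x u : artL w b (x :: u) = (eps w b x * (count (fun y => (x < y)%N) u)%:Z + artL w b u)%R.
Proof. by []. Qed.

Lemma artL_ins w b t k M : all (fun x => x < M) t ->
  artL w b (insl t k M) = (artL w b t + Pv w b t k)%R.
Proof.
elim: t k => [|x t IH] [|k] hall.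
- by rewrite /= /Pv big_nil !addr0 mulr0.
- by rewrite /= /Pv big_nil !addr0 mulr0.
- by rewrite (_ : insl (x :: t) 0 M = M :: x :: t) // artL_cons count_gt0 // mulr0 add0r /Pv take0 big_nil addr0.
- move: hall => /andP[xM hall].
  rewrite (_ : insl (x :: t) k.+1 M = x :: insl t k M) // !artL_cons IH // /Pv take_cons big_cons.
  have -> : count (fun y => x < y) (insl t k M) = (count (fun y => x < y) t).+1.
    by rewrite (seq.permP (perm_insl t k M)) /= xM add1n.
  by rewrite -addn1 PoszD mulrDr mulr1; ring.
Qed.

Lemma valid_cons w b x u : valid w b (x :: u) =
  (if u is y :: _ then okp w b x y else true) && valid w b u.
Proof. by case: u. Qed.

Lemma valid_ins w b t k M : valid w b t -> k <= size t -> insp w b t k ->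
  all (fun x => x < M) t -> valid w b (insl t k M).
Proof.
elim: t k => [|x t IH] [|k] //.
- move=> hv _ hw /andP[xM _]; rewrite /insp /lok /rok /= in hw.
  by rewrite (_ : insl _ 0 M = M :: x :: t) // valid_cons hv andbT /okp hw xM implybT.
- rewrite [size _]/= ltnS => hv hk /andP[hl hr] /andP[xM hall].
  have hv' : valid w b t by move: hv; rewrite valid_cons => /andP[].
  have hi : insp w b t k.
    by rewrite /insp; apply/andP; split => //; case: k {hk hr IH} hl.
  rewrite (_ : insl _ k.+1 M = x :: insl t k M) // valid_cons IH // andbT.
  case: k hk hl hr hi {IH} => [|k] hk hl hr hi /=.
    by rewrite /okp (negbTE hl) /= xM implybT.
  case: t hv hk {hv' hall hi hr hl} => // y t /andP[].
  by [].
Qed.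

Lemma rem_ins t k M : M \notin t -> k <= size t ->
  rem M (insl t k M) = t /\ index M (insl t k M) = k.
Proof.
elim: t k => [|x t IH] [|k] //=; rewrite ?eqxx //.
rewrite inE negb_or ltnS => /andP[xM hM] hk.
by rewrite eq_sym (negbTE xM) /=; case: (IH k hM hk) => -> ->.
Qed.

Lemma okp_xM w b x M : okp w b x M -> x < M -> ~~ b x.
Proof.
by rewrite /okp => /andP[/implyP h _] xM; apply/negP => /h /andP[_]; rewrite ltnNge ltnW.
Qed.

Lemma okp_Mz w b z M : okp w b M z -> z < M -> w z.
Proof.
by rewrite /okp => /andP[_ /implyP h] zM; apply/negPn/negP => /h; rewrite ltnNge ltnW.
Qed.

Lemma ins_rem w b t M : valid w b t -> uniq t -> M \in t ->
  all (fun x => x <= M) t ->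
  [/\ insl (rem M t) (index M t) M = t, valid w b (rem M t),
      insp w b (rem M t) (index M t) & index M t <= size (rem M t)].
Proof.
elim: t => [|x t IH] // hv /andP[xt ut].
rewrite inE => hM /andP[xM hall].
have hv' : valid w b t by move: hv; rewrite valid_cons => /andP[].
have [exM|nxM] := eqVneq x M.
  subst x; rewrite /= eqxx; split => //.
  rewrite /insp /lok /rok /=; case: t hv xt hall {IH hv' ut hM} => //= y t.
  rewrite inE negb_or => /andP[hok _] /andP[yx _] /andP[yM _].
  move: hok; rewrite /okp => /andP[_]; apply: contraTT => hy.
  by rewrite hy /= -leqNgt.
move: hM; rewrite eq_sym (negbTE nxM) /= => hM.
rewrite /= (negbTE nxM).
case: (IH hv' ut hM hall) => e1 e2 e3 e4.
have xlt : x < M by rewrite ltn_neqAle nxM xM.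
have nbx : index M t = 0 -> ~~ b x.
  case: t hv hM {IH e1 e2 e3 e4 hall ut xt hv'} => //= z t'.
  move=> /andP[hok _] _; case: eqP => // zM _; subst z.
  exact: okp_xM hok xlt.
split => //.
- by rewrite /= e1.
- rewrite valid_cons e2 andbT.
  case: t hv hM hall nbx ut {IH e1 e2 e3 e4 xt hv'} => // y t hv hM hall nbx ut /=.
  case: eqP => [yM|nyM] /=.
    subst y; case: t hv hM hall ut {nbx} => // z t /= /andP[h1 /andP[h2 _]] _ /andP[_ /andP[zM _]].
    rewrite inE negb_or => /andP[/andP[Mz _] _].
    have zlt : z < M by rewrite ltn_neqAle eq_sym Mz zM.
    by rewrite /okp (negbTE (okp_xM h1 xlt)) (okp_Mz h2 zlt).
  by case/andP: hv.
- rewrite /insp /lok /rok /=.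
  move: e3; rewrite /insp /lok /rok => /andP[l3 r3]; rewrite r3 andbT.
  by case: (index M t) nbx l3 => [|k] //= ->.
Qed.

Definition Vl w b i := [seq t <- permutations (iota 1 i) | valid w b t].

Lemma iotaS1 i : perm_eq (i.+1 :: iota 1 i) (iota 1 i.+1).
Proof.
have -> : iota 1 i.+1 = iota 1 i ++ [:: i.+1] by rewrite -[i.+1]addn1 iotaD addnC.
by rewrite -cat1s perm_catC.
Qed.

Lemma Vl_step w b i :
  perm_eq [seq insl t k i.+1 | t <- Vl w b i, k <- [seq k <- iota 0 (size t).+1 | insp w b t k]]
          (Vl w b i.+1).
Proof.
set M := i.+1.
have Mn : forall t, t \in Vl w b i -> M \notin t /\ all (fun x => x < M) t.
  move=> t; rewrite mem_filter mem_permutations => /andP[_ /perm_mem pt].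
  split; first by rewrite pt mem_iota /M; lia.
  by apply/allP => x; rewrite pt mem_iota /M; lia.
apply: uniq_perm.
- apply: allpairs_uniq_dep.
  + by rewrite filter_uniq // permutations_uniq.
  + by move=> t _; rewrite filter_uniq // iota_uniq.
  move=> [t1 k1] [t2 k2] /allpairsPdep[t1' [k1' [h1 h2 E1]]] /allpairsPdep[t2' [k2' [h1' h2' E2]]].
  pose tg := fun p : {x : seq nat & nat} => (projT2 p : nat).
  move: (congr1 tag E1) (congr1 tg E1) (congr1 tag E2) (congr1 tg E2) => /= e1 e2 e3 e4.
  subst t1' k1' t2' k2' => /= E.
  move: h2 h2'; rewrite !mem_filter !mem_iota add0n !ltnS => /andP[_ /andP[_ hk1]] /andP[_ /andP[_ hk2]].
  case: (Mn _ h1) => n1 _; case: (Mn _ h1') => n2 _.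
  case: (rem_ins n1 hk1) => r1 i1.
  case: (rem_ins n2 hk2) => r2 i2.
  rewrite E in r1 i1; rewrite r1 in r2; rewrite i1 in i2; subst.
  by rewrite r2 i2.
- by rewrite filter_uniq // permutations_uniq.
move=> u; apply/allpairsPdep/idP.
  move=> [t [k [ht hk ->]]].
  move: hk; rewrite mem_filter mem_iota add0n ltnS => /andP[hins /andP[_ hk]].
  case: (Mn _ ht) => nM hall.
  move: ht; rewrite !mem_filter !mem_permutations => /andP[hv hp].
  rewrite valid_ins //.
  apply: perm_trans (perm_insl t k M) _.
  apply: perm_trans (iotaS1 i).
  by rewrite perm_cons.
rewrite mem_filter mem_permutations => /andP[hv hp].
have uu : uniq u by rewrite (perm_uniq hp) iota_uniq.
have Mu : M \in u by rewrite (perm_mem hp) mem_iota /M; lia.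
have hall : all (fun x => x <= M) u.
  by apply/allP => x; rewrite (perm_mem hp) mem_iota /M; lia.
case: (ins_rem hv uu Mu hall) => e1 e2 e3 e4.
exists (rem M u), (index M u); split => //.
  rewrite mem_filter e2 mem_permutations /=.
  rewrite -(perm_cons M); apply: perm_trans (_ : perm_eq _ u) _.
    by rewrite perm_sym -{1}e1 perm_insl.
  by apply: perm_trans hp _; rewrite perm_sym iotaS1.
by rewrite mem_filter e3 mem_iota add0n ltnS e4.
Qed.

Section LV.
Local Open Scope ring_scope.

Lemma level (R : fieldType) (q : R) (hq : q != 0) (w b : pred nat)
  (wb : forall x, w x -> ~~ b x) i :
  \sum_(t <- Vl w b i) q ^ artL w b t =
  \prod_(0 <= j < i) qint q (count w (iota 1 j) + 1 - count b (iota 1 j))%N.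
Proof.
have qu : q \is a GRing.unit by rewrite unitfE.
elim: i => [|i IH].
  by rewrite /Vl /= big_cons big_nil big_geq // addr0 expr0z.
rewrite big_nat_recr //= -IH -(perm_big _ (Vl_step w b i)) big_allpairs_dep.
rewrite mulr_suml; apply: eq_big_seq => t ht.
have [hv hp] : valid w b t /\ perm_eq t (iota 1 i).
  by move: ht; rewrite /Vl mem_filter mem_permutations => /andP[].
have hall : all (fun x => (x < i.+1)%N) t.
  by apply/allP => x; rewrite (perm_mem hp) mem_iota; lia.
under eq_bigr => k _ do rewrite artL_ins // exprzDr //.
rewrite -mulr_sumr big_filter; congr (_ * _).
have -> : \sum_(k <- iota 0 (size t).+1 | insp w b t k) q ^ Pv w b t k = Sins q w b t.
  by rewrite /Sins /index_iota subn0.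
case: (Sins_lem hq wb hv) => -> _.
by rewrite !(seq.permP hp).
Qed.
End LV.

Definition xs (t : seq nat) i := nth 0 (0 :: t) i.
Definition pkL t i := [&& 0 < i, i <= size t, xs t i.-1 < xs t i & xs t i.+1 < xs t i].
Definition vlL t i := [&& 0 < i, i <= size t, xs t i < xs t i.-1 & xs t i < xs t i.+1].
Definition ddL t i := [&& 0 < i, i <= size t, xs t i < xs t i.-1 & xs t i.+1 < xs t i].

Lemma xs_out t i : size t < i -> xs t i = 0.
Proof. by case: i => // i; rewrite /xs /= ltnS => h; rewrite nth_default. Qed.

Lemma xs_pos t i : all (fun x => 0 < x) t -> 0 < i -> i <= size t -> 0 < xs t i.
Proof.
move=> /allP h; case: i => // i _ hi; apply: h; rewrite /xs /=.
by apply: mem_nth.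
Qed.

Lemma xs_inj t i j : uniq t -> 0 < i -> i <= size t -> 0 < j -> j <= size t ->
  xs t i = xs t j -> i = j.
Proof.
case: i => // i; case: j => // j ut _ hi _ hj; rewrite /xs /= => /eqP.
by rewrite nth_uniq // => /eqP ->.
Qed.

Lemma valid_xs w b t : valid w b t <->
  (forall i, 0 < i -> i < size t -> okp w b (xs t i) (xs t i.+1)).
Proof.
elim: t => [|x u IH]; first by split => // _ [].
rewrite valid_cons; split.
  move=> /andP[hh /IH hu] [|[|i]] // _ hi.
    by case: u hh {IH hu} hi.
  by move: hi; rewrite /= ltnS => hi; apply: (hu i.+1).
move=> h; apply/andP; split.
  by case: u h {IH} => // y u h; apply: (h 1).
by apply/IH => -[|i] // _ hs; apply: (h i.+2).
Qed.

Lemma insp_xs w b t k : insp w b t k =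
  ((k == 0) || ~~ b (xs t k)) && ((k == size t) || w (xs t k.+1)).
Proof. by case: k. Qed.

Lemma dir1 (w b : pred nat) t : uniq t -> all (fun x => 0 < x) t ->
  (forall i, vlL t i -> w (xs t i)) ->
  (forall i, 0 < i -> i <= size t -> b (xs t i) -> pkL t i) ->
  (forall i, ~~ ddL t i) -> valid w b t.
Proof.
move=> ut pt hV hP hD; apply/valid_xs => i i0 hi.
have key : xs t i.+1 < xs t i -> w (xs t i.+1).
  move=> hlt; apply: hV; rewrite /vlL /= hlt hi /=.
  have := hD i.+1; rewrite /ddL /= hlt hi /= -leqNgt => hle.
  rewrite ltn_neqAle hle andbT; apply/eqP => e.
  have hpos : 0 < xs t i.+1 := xs_pos pt (ltn0Sn i) hi.
  case: (ltnP i.+1 (size t)) => hs.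
    by have := xs_inj ut (ltn0Sn i) hi (ltn0Sn i.+1) hs e; lia.
  by move: hpos; rewrite e xs_out.
rewrite /okp; apply/andP; split.
  apply/implyP => hb; have := hP i i0 (ltnW hi) hb; rewrite /pkL => /and4P[_ _ _ hlt].
  by rewrite key.
apply/implyP => hw; rewrite ltn_neqAle; apply/andP; split.
  by apply/eqP => e; have := xs_inj ut i0 (ltnW hi) (ltn0Sn i) hi e; lia.
by rewrite leqNgt; exact: (contra key hw).
Qed.

Lemma dir2 (w b : pred nat) t : uniq t -> all (fun x => 0 < x) t ->
  (forall x, w x -> ~~ b x) -> valid w b t -> 0 < size t ->
  (forall k, k <= size t -> ~~ insp w b t k) ->
  [/\ forall i, 0 < i -> i <= size t -> vlL t i = w (xs t i),
      forall i, 0 < i -> i <= size t -> pkL t i = b (xs t i),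
      forall i, ~~ ddL t i,
      forall i, 0 < i -> i < size t -> xs t i.+1 < xs t i -> b (xs t i) && w (xs t i.+1)
    & b (xs t (size t))].
Proof.
move=> ut pt wb /valid_xs hv s0 hn.
have N0 : ~~ w (xs t 1).
  by have := hn 0 (leq0n _); rewrite insp_xs /= eq_sym (negbTE (lt0n_neq0 s0)).
have Nm : b (xs t (size t)).
  have := hn _ (leqnn _); rewrite insp_xs eqxx (negbTE (lt0n_neq0 s0)) /= andbT.
  by rewrite negbK.
have Nk : forall k, 0 < k -> k < size t -> w (xs t k.+1) -> b (xs t k).
  move=> k k0 km hw; have := hn k (ltnW km); rewrite insp_xs hw orbT andbT.
  by rewrite (negbTE (lt0n_neq0 k0)) /= negbK.
have pos : forall i, 0 < i -> i <= size t -> 0 < xs t i.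
  by move=> i; apply: xs_pos.
have E : forall i, 0 < i -> i < size t -> xs t i.+1 < xs t i -> b (xs t i) && w (xs t i.+1).
  move=> i i0 im hlt; have := hv i i0 im; rewrite /okp => /andP[_ /implyP h].
  have hw : w (xs t i.+1) by apply/negPn/negP => /h; rewrite ltnNge ltnW.
  by rewrite hw Nk.
have neq : forall i, 0 < i -> i < size t -> xs t i != xs t i.+1.
  by move=> i i0 im; apply/eqP => e; have := xs_inj ut i0 (ltnW im) (ltn0Sn i) im e; lia.
have x0 : xs t 0 = 0 by [].
have xm : xs t (size t).+1 = 0 by rewrite xs_out.
split => //.
- move=> [|i] // _ hi; rewrite /vlL /= hi /=; apply/idP/idP.
    case: i hi => [|i] hi; first by rewrite x0.
    by move=> /andP[h1 _]; have /andP[_ ->] := E i.+1 (ltn0Sn i) hi h1.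
  move=> hw; case: i hi hw => [|i] hi hw; first by rewrite hw in N0.
  have hm : i.+2 < size t.
    rewrite ltn_neqAle hi andbT; apply/eqP => e; move: Nm; rewrite -e.
    by move/negP: (wb _ hw).
  have hb := Nk i.+1 (ltn0Sn i) (ltnW hm) hw.
  have := hv i.+1 (ltn0Sn i) (ltnW hm); rewrite /okp hb /= => /andP[/andP[_ ->] _] /=.
  rewrite ltn_neqAle neq //= leqNgt; apply/negP => /(E _ (ltn0Sn _) hm) /andP[hb' _].
  by move/negP: (wb _ hw).
- move=> [|i] // _ hi; rewrite /pkL /= hi /=; apply/idP/idP.
    move=> /andP[_ h2]; case: (ltnP i.+1 (size t)) => hm.
      by have /andP[-> _] := E i.+1 (ltn0Sn i) hm h2.
    by have -> : i.+1 = size t by apply/eqP; rewrite eqn_leq hi hm.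
  move=> hb; apply/andP; split.
    case: i hi hb => [|i] hi hb; first by rewrite pos.
    have := hv i.+1 (ltn0Sn i) hi; rewrite /okp => /andP[_ /implyP]; apply.
    by apply/negP => /wb; rewrite hb.
  case: (ltnP i.+1 (size t)) => hm.
    by have := hv i.+1 (ltn0Sn i) hm; rewrite /okp hb /= => /andP[/andP[_ ->] _].
  have -> : i.+1 = size t by apply/eqP; rewrite eqn_leq hi hm.
  by rewrite xm pos.
- move=> [|i]; rewrite /ddL //=; apply/negP => /and3P[hi h1 h2].
  case: i hi h1 h2 => [|i] hi h1 h2; first by rewrite x0 in h1.
  have /andP[_ hw] := E i.+1 (ltn0Sn i) hi h1.
  case: (ltnP i.+2 (size t)) => hm.
    by have /andP[hb _] := E i.+2 (ltn0Sn _) hm h2; move/negP: (wb _ hw).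
  have e : i.+2 = size t by apply/eqP; rewrite eqn_leq hi hm.
  by move: Nm; rewrite -e; move/negP: (wb _ hw).
Qed.

Lemma count_nth (p : pred nat) s : count p s = \sum_(0 <= j < size s) p (nth 0 s j).
Proof.
elim: s => [|x s IH]; first by rewrite big_geq.
by rewrite /= big_nat_recl // IH.
Qed.

Definition cnt (t : seq nat) i := \sum_(0 <= j < size t) ((i < j) && (nth 0 t i < nth 0 t j)).

Lemma artL_sum w b t : artL w b t = (\sum_(0 <= i < size t) eps w b (nth 0 t i) * (cnt t i)%:Z)%R.
Proof.
elim: t => [|x u IH]; first by rewrite big_geq.
rewrite artL_cons IH /= big_nat_recl //; congr (_ * _ + _)%R.
  by rewrite /cnt /= big_nat_recl //= add0n count_nth.
apply: eq_bigr => i _; congr (_ * _)%R; rewrite /cnt /= big_nat_recl //=.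
Qed.

Definition Ls m (s : 'S_m) : seq nat := [seq (s j).+1 | j <- enum 'I_m].

Lemma size_Ls m (s : 'S_m) : size (Ls s) = m.
Proof. by rewrite size_map size_enum_ord. Qed.

Lemma nth_Ls m (s : 'S_m) (j : 'I_m) : nth 0 (Ls s) j = (s j).+1.
Proof. by rewrite (nth_map j) ?size_enum_ord // nth_ord_enum. Qed.

Lemma Ls_inj m : injective (@Ls m).
Proof.
move=> s1 s2 e; apply/permP => j; apply/val_inj.
by have := nth_Ls s1 j; rewrite e nth_Ls => -[].
Qed.

Lemma perm_Ls m (s : 'S_m) : perm_eq (Ls s) (iota 1 m).
Proof.
have -> : iota 1 m = map succn (iota 0 m) by rewrite (iotaDl 1 0).
rewrite /Ls (map_comp succn (fun j => val (s j))) perm_map //.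
rewrite (map_comp val s) -val_enum_ord perm_map //.
apply: uniq_perm; first by rewrite map_inj_uniq ?enum_uniq //; apply: perm_inj.
  exact: enum_uniq.
move=> x; rewrite mem_enum; apply/mapP; exists ((s^-1)%g x); first by rewrite mem_enum.
by rewrite permKV.
Qed.

Lemma uniq_Ls m (s : 'S_m) : uniq (Ls s).
Proof. by rewrite (perm_uniq (perm_Ls s)) iota_uniq. Qed.

Lemma pos_Ls m (s : 'S_m) : all (fun x => 0 < x) (Ls s).
Proof. by apply/allP => x /mapP[j _ ->]. Qed.

Lemma Ls_surj m t : perm_eq t (iota 1 m) -> exists s : 'S_m, Ls s = t.
Proof.
move=> hp.
have st : size t = m by rewrite (perm_size hp) size_iota.
have ut : uniq t by rewrite (perm_uniq hp) iota_uniq.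
have rng : forall j, j < m -> 0 < nth 0 t j <= m.
  move=> j jm; have : nth 0 t j \in iota 1 m by rewrite -(perm_mem hp) mem_nth // st.
  by rewrite mem_iota; lia.
pose f := fun j : 'I_m => insubd j (nth 0 t j).-1.
have fv : forall j : 'I_m, val (f j) = (nth 0 t j).-1.
  move=> j; rewrite val_insubd; case: ifP => //.
  by have := rng j (ltn_ord j); lia.
have finj : injective f.
  move=> j1 j2 /(congr1 val); rewrite !fv => e.
  apply/val_inj/eqP; rewrite -(nth_uniq 0 _ _ ut) ?st ?ltn_ord //.
  case/andP: (rng j1 (ltn_ord j1)) => a1 _; case/andP: (rng j2 (ltn_ord j2)) => a2 _.
  by apply/eqP; rewrite -(prednK a1) -(prednK a2) e.
exists (perm finj); apply: (@eq_from_nth _ 0); first by rewrite size_Ls st.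
move=> i; rewrite size_Ls => im.
rewrite (nth_Ls _ (Ordinal im)) permE fv /=.
by have := rng i im; lia.
Qed.

Lemma sum_Ls (R : nmodType) m (P : pred (seq nat)) (F : seq nat -> R) :
  (\sum_(s : 'S_m | P (Ls s)) F (Ls s) = \sum_(t <- permutations (iota 1 m) | P t) F t)%R.
Proof.
rewrite -(big_map (@Ls m) P F); apply: perm_big.
apply: uniq_perm.
- by rewrite map_inj_uniq ?index_enum_uniq //; apply: Ls_inj.
- exact: permutations_uniq.
move=> t; rewrite mem_permutations; apply/mapP/idP.
  by move=> [s _ ->]; apply: perm_Ls.
by move=> /Ls_surj [s <-]; exists s => //; rewrite mem_index_enum.
Qed.

Definition wP N (W : {set 'I_N}) : pred nat := fun x => x \in [seq val y | y <- enum W].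

Lemma wP_val N (W : {set 'I_N}) (y : 'I_N) : wP W y = (y \in W).
Proof. by rewrite /wP mem_map ?mem_enum //; exact: val_inj. Qed.

Lemma wP_ex N (W : {set 'I_N}) x : wP W x -> exists2 y : 'I_N, y \in W & val y = x.
Proof. by move/mapP => [y]; rewrite mem_enum => hy ->; exists y. Qed.

Lemma card_sum (T : finType) (P : pred T) : #|[set x | P x]| = \sum_(x : T) (P x : nat).
Proof.
rewrite -sum1_card big_mkcond /=; apply: eq_bigr => x _.
by rewrite inE; case: (P x).
Qed.

Lemma cntW N (W : {set 'I_N}) j : (forall y, y \in W -> 0 < val y) -> j < N ->
  count (wP W) (iota 1 j) = #|[set x in W | x < j.+1]|.
Proof.
move=> h0 jN.
rewrite card_sum.
rewrite (eq_bigr (fun x : 'I_N => (((wP W) (val x)) && (val x < j.+1) : nat))); last first.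
  by move=> x _; rewrite wP_val.
rewrite -(big_mkord xpredT (fun i => ((wP W i) && (i < j.+1) : nat))).
rewrite -big_mkcond /= -(big_nat_widen _ _ _ _ _ jN) /= big_mkcond /=.
rewrite -[RHS]big_mkcond sum1_count /index_iota subn0 /=.
suff -> : wP W 0 = false by [].
by apply/negP => /wP_ex [y /h0 hy e]; rewrite e in hy.
Qed.

Lemma adm_facts n (W B : {set 'I_(n.*2.+2)}) : admissible W B ->
  [/\ forall x, wP W x -> ~~ wP B x, forall x, wP W x -> odd x,
      forall x, wP B x -> odd x, #|B| = #|W|.+1 & (ord_max : 'I_(n.*2.+2)) \in B].
Proof.
case/and5P => hd /forallP ho /eqP hc hm _; split => //.
- by move=> x /wP_ex[y hy <-]; rewrite wP_val (disjointFr hd hy).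
- by move=> x /wP_ex[y hy <-]; have := ho y; rewrite inE hy.
- by move=> x /wP_ex[y hy <-]; have := ho y; rewrite inE hy orbT.
Qed.

Lemma countW n (W : {set 'I_(n.*2.+2)}) t : (forall x, wP W x -> odd x) ->
  perm_eq t (iota 1 n.*2.+1) -> count (wP W) t = #|W|.
Proof.
move=> ho hp; rewrite (seq.permP hp) cntW //.
  by apply: eq_card => x; rewrite inE ltn_ord andbT.
by move=> y hy; apply: odd_gt0; apply: ho; rewrite wP_val.
Qed.

Section NI.
Local Open Scope ring_scope.
Lemma no_ins (w b : pred nat) (wb : forall x, w x -> ~~ b x) t :
  valid w b t -> (count w t + 1 = count b t)%N ->
  forall k, (k <= size t)%N -> ~~ insp w b t k.
Proof.
move=> hv hc k hk; apply/negP => hi.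
have [hS _] := Sins_lem (oner_neq0 rat) wb hv.
move: hS; rewrite hc subnn /qint big_ord0 /Sins.
rewrite (eq_bigr (fun _ => (1%N)%:R)); last by move=> i _; rewrite exp1rz.
rewrite -natr_sum sum1_count => /eqP; rewrite pnatr_eq0 -leqn0 leqNgt -has_count => /negP; apply.
by apply/hasP; exists k => //; rewrite /index_iota subn0 mem_iota; lia.
Qed.
End NI.

Lemma vlE m (s : 'S_m) i : is_valley_pos s i = vlL (Ls s) i.
Proof. by rewrite /vlL size_Ls. Qed.
Lemma pkE m (s : 'S_m) i : is_peak_pos s i = pkL (Ls s) i.
Proof. by rewrite /pkL size_Ls. Qed.
Lemma ddE m (s : 'S_m) i : is_ddes_pos s i = ddL (Ls s) i.
Proof. by rewrite /ddL size_Ls. Qed.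
Lemma svE m (s : 'S_m) i : sv s i = xs (Ls s) i.
Proof. by []. Qed.
Lemma xsLs m (s : 'S_m) (j : 'I_m) : xs (Ls s) j.+1 = (s j).+1.
Proof. exact: nth_Ls. Qed.

Lemma valid_struct n (W B : {set 'I_(n.*2.+2)}) (s : 'S_(n.*2.+1)) :
  admissible W B -> valid (wP W) (wP B) (Ls s) ->
  let t := Ls s in
  [/\ forall i, 0 < i -> i <= size t -> vlL t i = wP W (xs t i),
      forall i, 0 < i -> i <= size t -> pkL t i = wP B (xs t i),
      forall i, ~~ ddL t i,
      forall i, 0 < i -> i < size t -> xs t i.+1 < xs t i -> wP B (xs t i) && wP W (xs t i.+1)
    & wP B (xs t (size t))].
Proof.
move=> hA hv t; case: (adm_facts hA) => wb oW oB cB _.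
apply: dir2 => //; first exact: uniq_Ls.
- exact: pos_Ls.
- by rewrite size_Ls.
apply: no_ins => //.
by rewrite (countW oW (perm_Ls s)) (countW oB (perm_Ls s)) cB addn1.
Qed.

Lemma hatA_valid n (W B : {set 'I_(n.*2.+2)}) (s : 'S_(n.*2.+1)) : 0 < n ->
  admissible W B -> hatA W B s = valid (wP W) (wP B) (Ls s).
Proof.
move=> n0 hA; case: (adm_facts hA) => wb oW oB cB _.
set t := Ls s.
have st : size t = n.*2.+1 by rewrite size_Ls.
apply/idP/idP.
  case/and3P => [/and3P[hW /forallP hD hlast] /eqP hV /eqP hP].
  apply: dir1; first exact: uniq_Ls.
  - exact: pos_Ls.
  - move=> i hv; have := hv; rewrite /vlL => /and4P[i0 im _ _].
    case: i i0 im hv => // i _; rewrite st => im hv.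
    have xl : xs t i.+1 < n.*2.+2.
      by rewrite (xsLs s (Ordinal im)) ltnS ltn_ord.
    have -> : xs t i.+1 = val (Ordinal xl) by [].
    rewrite wP_val -hV inE; apply/existsP; exists (Ordinal im).
    by rewrite vlE hv /= eqxx.
  - move=> i i0 im /wP_ex[y]; rewrite -hP inE => /existsP[j /andP[hpk /eqP hy]] e.
    rewrite pkE in hpk.
    have := xs_inj (uniq_Ls s) (ltn0Sn j) (_ : j.+1 <= size t) i0 im.
    rewrite st ltn_ord => /(_ isT); rewrite -svE hy e => /(_ erefl) <-.
    exact: hpk.
  - move=> i; rewrite -ddE; apply/negP => hd.
    have := hd; rewrite /is_ddes_pos => /and4P[i0 im _ _].
    case: i i0 im hd => // i _ im hd.
    by move/negP: (hD (Ordinal im)).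
move=> hv; case: (valid_struct hA hv) => ha hb hc hd he.
rewrite -/t st in ha hb hc hd he.
have odd_of : forall v, wP W v || wP B v -> odd v.
  by move=> v /orP[/oW|/oB].
apply/and3P; split.
- apply/and3P; split.
  + apply/andP; split.
      apply/forallP => i; apply/implyP => hi; apply/implyP => hlt.
      rewrite !svE in hlt *.
      have /andP[h1 h2] := hd i.+1 (ltn0Sn i) hi hlt.
      by rewrite !odd_of // ?h1 ?h2 ?orbT.
    by rewrite svE odd_of // he orbT.
  + by apply/forallP => i; rewrite ddE.
  + have := hb _ (ltn0Sn _) (leqnn _); rewrite he /pkL => /and4P[_ _ h _].
    by rewrite !svE.
- apply/eqP/setP => y; rewrite inE; apply/existsP/idP.
    move=> [j /andP[hv' /eqP hy]]; rewrite vlE ha ?ltn_ord // in hv'.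
    by rewrite -wP_val -hy.
  move=> hy.
  have yt : val y \in t.
    rewrite (perm_mem (perm_Ls s)) mem_iota -ltnS ltn_ord andbT.
    by apply: odd_gt0; apply: oW; rewrite wP_val.
  have jm : index (val y) t < n.*2.+1 by move: yt; rewrite -index_mem st.
  exists (Ordinal jm); rewrite vlE ha //= ?ltn_ord //.
  by rewrite svE /xs /= nth_index // eqxx wP_val hy.
- apply/eqP/setP => y; rewrite inE; apply/existsP/idP.
    move=> [j /andP[hv' /eqP hy]]; rewrite pkE hb ?ltn_ord // in hv'.
    by rewrite -wP_val -hy.
  move=> hy.
  have yt : val y \in t.
    rewrite (perm_mem (perm_Ls s)) mem_iota -ltnS ltn_ord andbT.
    by apply: odd_gt0; apply: oB; rewrite wP_val.
  have jm : index (val y) t < n.*2.+1 by move: yt; rewrite -index_mem st.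
  exists (Ordinal jm); rewrite pkE hb //= ?ltn_ord //.
  by rewrite svE /xs /= nth_index // eqxx wP_val hy.
Qed.

Section ART.
Local Open Scope ring_scope.

Lemma sumZ (I : finType) (F : I -> nat) : ((\sum_i F i)%N)%:Z = \sum_i (F i)%:Z.
Proof. by rewrite -natz natr_sum; apply: eq_bigr => i _; rewrite natz. Qed.

Lemma art_eq n (W B : {set 'I_(n.*2.+2)}) (s : 'S_(n.*2.+1)) :
  admissible W B -> valid (wP W) (wP B) (Ls s) ->
  art s = artL (wP W) (wP B) (Ls s).
Proof.
move=> hA hv; case: (valid_struct hA hv) => ha hb _ _ _.
have hV : forall j : 'I_(n.*2.+1), is_valley_pos s j.+1 = wP W (s j).+1.
  by move=> j; rewrite vlE ha ?size_Ls ?xsLs.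
have hP : forall j : 'I_(n.*2.+1), is_peak_pos s j.+1 = wP B (s j).+1.
  by move=> j; rewrite pkE hb ?size_Ls ?xsLs.
rewrite artL_sum size_Ls big_mkord /art.
have E : forall y : 'I_(n.*2.+1), (vcount s y)%:Z - (pcount s y)%:Z =
    \sum_(j : 'I_(n.*2.+1)) eps (wP W) (wP B) (s j).+1 * (((s j < y) && (j < (s^-1)%g y))%N : nat)%:Z.
  move=> y; rewrite /vcount /pcount !card_sum !sumZ -sumrB; apply: eq_bigr => j _.
  rewrite hV hP /eps.
  by case: (wP W _); case: (wP B _); case: (_ < _)%N; case: (_ < _)%N.
rewrite (eq_bigr _ (fun y _ => E y)) exchange_big /=; apply: eq_bigr => j _.
rewrite -mulr_sumr nth_Ls; congr (_ * _).
rewrite /cnt size_Ls big_mkord sumZ.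
rewrite (reindex_inj (@perm_inj _ s)) /=; apply: eq_bigr => k _.
by rewrite permK !nth_Ls ltnS andbC.
Qed.
End ART.

Unset Implicit Arguments.
Local Open Scope ring_scope.

Theorem mainTheorem7 (n : nat) (W B : {set 'I_(n.*2.+2)})
  (hn : (1 <= n)%N) (hA : admissible W B)
  (R : fieldType) (q : R) (hq : q != 0) :
  \sum_(s : 'S_(n.*2.+1) | hatA W B s) q ^ (art s)
  = \prod_(1 <= i < n.*2.+1) qint q (avec W B i).
Proof.
case: (adm_facts hA) => wb oW oB cB hm.
have hd : [disjoint W & B] by case/and5P: hA.
have mW : (ord_max : 'I_(n.*2.+2)) \notin W by rewrite (disjointFl hd hm).
have p0 : forall (V : {set 'I_(n.*2.+2)}), (forall x, wP V x -> odd x) ->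
    forall y, y \in V -> (0 < val y)%N.
  by move=> V hV y hy; apply: odd_gt0; apply: hV; rewrite wP_val.
rewrite (eq_bigl (fun s => valid (wP W) (wP B) (Ls s))); last by move=> s; rewrite hatA_valid.
rewrite (eq_bigr (fun s => q ^ artL (wP W) (wP B) (Ls s))); last by move=> s hs; rewrite (art_eq hA hs).
rewrite (@sum_Ls R (n.*2.+1) (fun t => valid (wP W) (wP B) t) (fun t => q ^ artL (wP W) (wP B) t)).
rewrite -[LHS]big_filter -/(Vl _ _ _) level //.
rewrite big_nat_recr //= big_add1 /=.
have lastE : qint q (count (wP W) (iota 1 n.*2) + 1 - count (wP B) (iota 1 n.*2))%N = 1.
  have sE : forall x : 'I_(n.*2.+2), (x < n.*2.+1)%N = (x != ord_max).
    by move=> x; rewrite -(inj_eq val_inj) /= ltn_neqAle -ltnS ltn_ord andbT.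
  have hN : (n.*2 < n.*2.+2)%N by rewrite ltnS leqnSn.
  rewrite (cntW (p0 _ oW) hN) (cntW (p0 _ oB) hN).
  have -> : [set x in W | (x < n.*2.+1)%N] = W.
    apply/setP => x; rewrite !inE sE; case: eqP => [->|]; last by rewrite andbT.
    by rewrite (negbTE mW).
  have -> : [set x in B | (x < n.*2.+1)%N] = B :\ ord_max.
    by apply/setP => x; rewrite !inE sE andbC.
  have := cardsD1 ord_max B; rewrite hm cB add1n => -[<-].
  by rewrite addn1 subSn // subnn /qint big_ord1 expr0.
rewrite lastE mulr1; apply: eq_big_nat => j /andP[_ hj].
have hN : (j < n.*2.+2)%N by lia.
by rewrite /avec (cntW (p0 _ oW) hN) (cntW (p0 _ oB) hN) addn1.
Qed.
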